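(* Let $F:\{0,1\}^n\to\mathbb{F}^E_m\cap[0,1]$ be a finite-precision CDF over a binary number format $\mathcal{B}=(n,\gamma_{\mathcal{B}},\phi_{\mathcal{B}})$. The expected number of fair random bits drawn by the procedure $\textsc{Opt}(F)$ described in the context is at most $m+2-2^{-2^{E-1}+3}$.
   Context: $\overline{\mathbb{R}}=\mathbb{R}\cup\{-\infty,+\infty,\bot\}$ is totally ordered by $-\infty<$ reals $<+\infty<\bot$. A binary number format $\mathcal{B}=(n,\gamma_{\mathcal{B}},\phi_{\mathcal{B}})$ consists of $n\ge1$, $\gamma_{\mathcal{B}}:\{0,1\}^n\to\overline{\mathbb{R}}$, and a bijection $\phi_{\mathcal{B}}$ of $\{0,1\}^n$ with $b<_{\mathrm{dict}}b'\Rightarrow\gamma_{\mathcal{B}}(\phi_{\mathcal{B}}(b))\le\gamma_{\mathcal{B}}(\phi_{\mathcal{B}}(b'))$; it induces the order $b<_{\mathcal{B}}b'$ iff $\phi_{\mathcal{B}}^{-1}(b)<_{\mathrm{dict}}\phi_{\mathcal{B}}^{-1}(b')$. $\mathbb{F}^E_m\cap[0,1]$ is the set of reals in $[0,1]$ representable as IEEE-754-style floating-point numbers with $E$ exponent and $m$ mantissa bits. A finite-precision CDF over $\mathcal{B}$ is $F:\{0,1\}^n\to\mathbb{F}^E_m\cap[0,1]$ with $F(\phi_{\mathcal{B}}(1^n))=1$ and $b<_{\mathcal{B}}b'\Rightarrow F(b)\le F(b')$. For $z\in[0,1]$ with concise binary expansion $(z_0.z_1z_2\ldots)_2$ write $[z]_j=z_j$.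 $\textsc{Opt}(F,b,\ell,f_0,f_1)$, called initially as $\textsc{Opt}(F,\varepsilon,0,0,1)$: if $|b|=n$ return $\phi_{\mathcal{B}}(b)$. Let $f_2=F(\phi_{\mathcal{B}}(b\,0\,1^{n-|b|-1}))$. If $f_2=f_1$ return $\textsc{Opt}(F,b0,\ell,f_0,f_2)$; if $f_2=f_0$ return $\textsc{Opt}(F,b1,\ell,f_2,f_1)$. Let $a_0(j)=[f_2-f_0]_j$, $a_1(j)=[f_1-f_2]_j$ (exact real differences). If $\ell>0$: if $a_0(\ell)=1,a_1(\ell)=0$ return $\textsc{Opt}(F,b0,\ell,f_0,f_2)$; if $a_0(\ell)=0,a_1(\ell)=1$ return $\textsc{Opt}(F,b1,\ell,f_2,f_1)$. Then repeat: draw a fair random bit $x$, set $\ell\leftarrow\ell+1$; if $x=0$ and $a_0(\ell)=1$ return $\textsc{Opt}(F,b0,\ell,f_0,f_2)$; if $x=1$ and $a_1(\ell)=1$ return $\textsc{Opt}(F,b1,\ell,f_2,f_1)$. *)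

(* Defs.v *)
From Stdlib Require Reals.
From mathcomp Require Import all_boot all_order all_algebra.
Set Implicit Arguments. Unset Strict Implicit. Unset Printing Implicit Defensive.
Import Order.TTheory GRing.Theory Num.Theory.
Local Open Scope ring_scope.

Inductive extR := ENegInf | EReal (r : Reals.Rdefinitions.R) | EPosInf | EBot.

Definition ext_le (x y : extR) : Prop :=
  match x, y with
  | ENegInf, _ => True
  | EReal _, ENegInf => False
  | EReal r, EReal s => Reals.Rdefinitions.Rle r s
  | EReal _, _ => True
  | EPosInf, (EPosInf | EBot) => True
  | EPosInf, _ => False
  | EBot, EBot => True
  | EBot, _ => False
  end.

Fixpoint lex_lt (s t : seq bool) : bool :=
  match s, t with
  | x :: s', y :: t' => (~~ x && y) || ((x == y) && lex_lt s' t')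
  | _, _ => false
  end.

Record BinFormat (n : nat) := {
  bf_n_pos : (0 < n)%N;
  bf_gamma : n.-tuple bool -> extR;
  bf_phi : n.-tuple bool -> n.-tuple bool;
  bf_phi_bij : bijective bf_phi;
  bf_phi_mono : forall b b' : n.-tuple bool,
      lex_lt b b' -> ext_le (bf_gamma (bf_phi b)) (bf_gamma (bf_phi b'))
}.

Definition fmt_lt n (B : BinFormat n) (b b' : n.-tuple bool) : Prop :=
  exists c c' : n.-tuple bool,
    [/\ bf_phi B c = b, bf_phi B c' = b' & lex_lt c c'].

Definition fbias (E : nat) : int := (2 ^ E.-1)%:Z - 1.

(* value of the nonnegative float with biased exponent field e and mantissa M *)
Definition float_val (E m e M : nat) : rat :=
  if e == 0%N then (M%:R / 2 ^+ m) * (2 : rat) ^ (1 - fbias E)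
  else (1 + M%:R / 2 ^+ m) * (2 : rat) ^ (e%:Z - fbias E).

(* finite (non-inf, non-NaN) representable values: exponent field < 2^E - 1 *)
Definition is_float (E m : nat) (x : rat) : Prop :=
  exists e M : nat, [/\ (e < 2 ^ E - 1)%N, (M < 2 ^ m)%N & x = float_val E m e M].

Definition in_F01 (E m : nat) (x : rat) : Prop := is_float E m x /\ 0 <= x <= 1.

Definition is_fp_cdf (E m n : nat) (B : BinFormat n) (F : n.-tuple bool -> rat) : Prop :=
  [/\ forall b, in_F01 E m (F b),
      F (bf_phi B [tuple of nseq n true]) = 1
    & forall b b', fmt_lt B b b' -> F b <= F b'].

(* j-th digit of the concise binary expansion (z_0.z_1 z_2 ...)_2 of z in [0,1] *)
Definition bdigit (z : rat) (j : nat) : bool := odd `|Num.floor (z * 2 ^+ j)|%N.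

(* bit string of length n built from a seq (used only on seqs of size n) *)
Definition mk_tup n (s : seq bool) : n.-tuple bool := insubd (nseq_tuple n false) s.

(* outcome of running Opt on a finite prefix of the random bit stream *)
Inductive opt_res n := OptDone of n.-tuple bool & seq bool | OptNeedMore.
Arguments OptNeedMore {n}.

Definition needs_more n (r : opt_res n) : bool :=
  if r is OptNeedMore then true else false.

(* the "repeat" loop: draw bits until a branch is taken;
   None = the supplied bits ran out before the loop exited *)
Fixpoint opt_loop (d0 d1 : nat -> bool) (l : nat) (s : seq bool)
  : option (bool * nat * seq bool) :=
  match s with
  | [::] => None
  | x :: s' =>
      if ~~ x && d0 l.+1 then Some (false, l.+1, s')
      else if x && d1 l.+1 then Some (true, l.+1, s')
      else opt_loop d0 d1 l.+1 s'
  end.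

Section Opt.
Variables (n : nat) (B : BinFormat n) (F : n.-tuple bool -> rat).

Definition Fmid (b : seq bool) : rat :=
  F (bf_phi B (mk_tup n (b ++ false :: nseq (n - size b - 1) true))).

(* k = n - |b| is the remaining depth; s = remaining random bits *)
Fixpoint opt_run (k : nat) (b : seq bool) (l : nat) (f0 f1 : rat) (s : seq bool)
  : opt_res n :=
  match k with
  | 0%N => OptDone (bf_phi B (mk_tup n b)) s
  | k'.+1 =>
    let f2 := Fmid b in
    if f2 == f1 then opt_run k' (rcons b false) l f0 f2 s
    else if f2 == f0 then opt_run k' (rcons b true) l f2 f1 s
    else
      let d0 := bdigit (f2 - f0) in
      let d1 := bdigit (f1 - f2) in
      if (0 < l)%N && d0 l && ~~ d1 l then opt_run k' (rcons b false) l f0 f2 s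
      else if (0 < l)%N && ~~ d0 l && d1 l then opt_run k' (rcons b true) l f2 f1 s
      else match opt_loop d0 d1 l s with
           | None => OptNeedMore
           | Some (false, l', s') => opt_run k' (rcons b false) l' f0 f2 s'
           | Some (true, l', s') => opt_run k' (rcons b true) l' f2 f1 s'
           end
  end.

Definition Opt (s : seq bool) : opt_res n := opt_run n [::] 0 0 1 s.

(* P(T > k), T = number of fair bits drawn:  fraction of k-bit strings
   on which Opt requests a (k+1)-th bit *)
Definition tail_prob (k : nat) : rat :=
  #|[set s : k.-tuple bool | needs_more (Opt s)]|%:R / 2 ^+ k.

(* E[T] = sum_k P(T > k) (valid also when T = oo with positive prob.);
   E[T] <= c  iff every partial sum is <= c *)
Definition expected_bits_le (c : rat) : Prop :=
  forall N : nat, \sum_(k < N) tail_prob k <= c.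
End Opt.

(* Main.v *)
Require Import Defs.
From mathcomp Require Import all_boot all_order all_algebra zify ring lra.
Set Implicit Arguments. Unset Strict Implicit. Unset Printing Implicit Defensive.
Import Order.TTheory GRing.Theory Num.Theory.

Definition cnt (P : seq bool -> bool) (t : nat) : nat :=
  \sum_(s : t.-tuple bool) nat_of_bool (P s).

Lemma cnt0 P : cnt P 0 = P [::].
Proof.
rewrite /cnt (eq_bigr (fun _ => nat_of_bool (P [::]))); last by move=> s _; rewrite tuple0.
by rewrite sum_nat_const card_tuple card_bool expn0 mul1n.
Qed.

Lemma cntS P t : cnt P t.+1 = cnt (fun s => P (false :: s)) t + cnt (fun s => P (true :: s)) t.
Proof.
rewrite /cnt.
rewrite (reindex (fun p : bool * t.-tuple bool => [tuple of p.1 :: p.2])) /=; last first.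
  exists (fun u : t.+1.-tuple bool => (thead u, behead_tuple u)).
    by case=> x s _ /=; rewrite theadE; congr pair; apply: val_inj.
  move=> u _; apply: val_inj => /=. by case: u => [[|x s] ?]. 
rewrite -(pair_bigA _ (fun x (s : t.-tuple bool) => nat_of_bool (P (x :: s)))) /=.
by rewrite big_bool addnC.
Qed.

Lemma cnt_ext P Q t : (forall s, size s = t -> P s = Q s) -> cnt P t = cnt Q t.
Proof. by move=> h; apply: eq_bigr => s _; rewrite h ?size_tuple. Qed.

Lemma cnt_false t : cnt (fun _ => false) t = 0.
Proof. by rewrite /cnt big1. Qed.

Lemma cnt_le P t : cnt P t <= 2 ^ t.
Proof.
elim: t P => [|t IH] P; first by rewrite cnt0; case: (P [::]).
by rewrite cntS expnS mul2n -addnn leq_add.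
Qed.

Lemma card_cnt t (P : seq bool -> bool) :
  #|[set s : t.-tuple bool | P s]| = cnt P t.
Proof.
rewrite cardsE -sum1_card /cnt big_mkcond /=.
apply: eq_bigr => s _. by rewrite unfold_in; case: (P s).
Qed.
Lemma loop_bound (T : nat) (a c w kap : nat -> bool) (CL CR Cv lc : nat -> nat) :
  (forall j, kap j.+1 + a j.+1 + c j.+1 = 2 * kap j + w j.+1) ->
  (forall l, l < T -> lc l = (if a l.+1 then CL l.+1 else lc l.+1)
                           + (if c l.+1 then CR l.+1 else lc l.+1)) ->
  lc T = 1 ->
  (forall j, 0 < j <= T -> Cv j = if a j && ~~ c j then CL j
                                 else if ~~ a j && c j then CR j else lc j) ->
  forall l, l <= T ->
  kap l * lc l + \sum_(l.+1 <= j < T.+1) w j * Cv j <=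
  \sum_(l.+1 <= j < T.+1) (a j * CL j + c j * CR j) + kap T.
Proof.
move=> hk hlc hT hCv l hl.
move: {2}(T - l) (erefl (T - l)) => d hd.
elim: d l hl hd => [|d IH] l hl hd.
  have -> : l = T by apply/eqP; rewrite eqn_leq hl -subn_eq0 hd.
  by rewrite !big_geq // hT; case: (kap T).
have hlT : l < T by rewrite -subn_gt0 hd.
have hd' : T - l.+1 = d by rewrite subnS hd.
have hlT1 : l.+1 < T.+1 by [].
rewrite (bigop.big_ltn hlT1) (bigop.big_ltn hlT1).
have := IH l.+1 hlT hd'.
rewrite [lc l]hlc // [Cv l.+1]hCv; last by rewrite hlT.
have := hk l.
set S1 := \sum_(_ <= _ < _) _; set S2 := \sum_(_ <= _ < _) _.
set X := lc l.+1; set Y := CL l.+1; set Z := CR l.+1; set V := kap T.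
clearbody S1 S2 X Y Z V.
clear -S1.
case: (kap l); case: (kap l.+1); case: (a l.+1); case: (c l.+1); case: (w l.+1) => /=.
all: lia.
Qed.

Local Open Scope ring_scope.

Definition phi (j : nat) (x : rat) : int := Num.floor (x * 2 ^+ j).

Lemma phi_ge0 j x : 0 <= x -> 0 <= phi j x.
Proof. by move=> hx; rewrite /phi floor_ge0 mulr_ge0 // exprn_ge0. Qed.

Lemma phi_rec x j : 0 <= x -> phi j.+1 x = 2 * phi j x + (bdigit x j.+1)%:Z.
Proof.
move=> hx.
have h1 : phi j x * 2 <= phi j.+1 x.
  rewrite /phi floor_ge_int rmorphM /= exprS.
  have := floor_le (x * 2 ^+ j); move: (Num.floor _) => p hp.
  have -> : (2%:~R : rat) = 2 by []. lra.
have h2 : phi j.+1 x < phi j x * 2 + 2.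
  rewrite /phi floor_lt_int rmorphD rmorphM /= exprS.
  have := floorD1_gt (x * 2 ^+ j); move: (Num.floor _) => p hp.
  rewrite rmorphD /= in hp.
  have -> : (2%:~R : rat) = 2 by []. lra.
have hp := phi_ge0 j hx.
rewrite /bdigit -/(phi j.+1 x).
move: h1 h2 hp; move: (phi j.+1 x) (phi j x) => q p h1 h2 hp.
have [d [hd hq]] : exists d : nat, (d < 2)%N /\ q = p * 2 + d%:Z by exists (absz (q - p * 2)%R); lia.
have [k hk] : exists k : nat, p = k%:Z by exists (absz p); lia.
rewrite hq hk; have -> : (k%:Z * 2 + d%:Z) = (k.*2 + d)%N%:Z by rewrite -muln2; lia.
rewrite absz_nat oddD odd_double /=.
by case: d hd hq => [|[|d]] //= _ _; lia.
Qed.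

Lemma phi_add a c j : phi j a + phi j c <= phi j (a + c) <= phi j a + phi j c + 1.
Proof.
apply/andP; split.
  rewrite /phi floor_ge_int rmorphD /= mulrDl.
  by rewrite lerD // floor_le.
rewrite -ltzD1 /phi floor_lt_int.
have := floorD1_gt (a * 2 ^+ j); have := floorD1_gt (c * 2 ^+ j).
move: (Num.floor (a * _)) (Num.floor (c * _)) => p q hq hp.
rewrite !rmorphD /= in hp hq *. lra.
Qed.

Definition kapb a c j : bool := phi j (a + c) != phi j a + phi j c.

Lemma kap_int a c j : (kapb a c j)%:Z = phi j (a + c) - phi j a - phi j c.
Proof.
rewrite /kapb; have := phi_add a c j.
case: eqP => [->|]; first by move=> _; rewrite /=; lia.
move=> h1 h2; rewrite /=; lia.
Qed.

Lemma kap_rec a c j : 0 <= a -> 0 <= c ->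
  (kapb a c j.+1 + bdigit a j.+1 + bdigit c j.+1 = 2 * kapb a c j + bdigit (a + c) j.+1)%N.
Proof.
move=> ha hc.
have hac : 0 <= a + c by rewrite addr_ge0.
have := kap_int a c j; have := kap_int a c j.+1.
rewrite (phi_rec j ha) (phi_rec j hc) (phi_rec j hac).
move: (kapb a c j) (kapb a c j.+1) (bdigit a j.+1) (bdigit c j.+1) (bdigit (a + c) j.+1).
move: (phi j a) (phi j c) (phi j (a + c)) => pa pc pw k0 k1 da dc dw h1 h0.
apply/eqP; rewrite -(eqr_nat int) !natrD /= !natz.
apply/eqP; lia.
Qed.

Definition loopP (d0 d1 : nat -> bool) (h : bool -> nat -> seq bool -> bool) l s : bool :=
  match opt_loop d0 d1 l s with None => true | Some (x, l', s') => h x l' s' end.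

Lemma cnt_loop0 d0 d1 h l : cnt (loopP d0 d1 h l) 0 = 1%N.
Proof. by rewrite cnt0. Qed.

Lemma cnt_loopS d0 d1 h l t :
  cnt (loopP d0 d1 h l) t.+1 =
  ((if d0 l.+1 then cnt (h false l.+1) t else cnt (loopP d0 d1 h l.+1) t) +
   (if d1 l.+1 then cnt (h true l.+1) t else cnt (loopP d0 d1 h l.+1) t))%N.
Proof.
rewrite cntS; congr addn.
  by case hd: (d0 l.+1); apply: cnt_ext => s _; rewrite /loopP /= hd.
by case hd: (d1 l.+1); apply: cnt_ext => s _; rewrite /loopP /= hd.
Qed.

Lemma needs_more_loop n d0 d1 l s (X Y : nat -> seq bool -> opt_res n) :
  needs_more (match opt_loop d0 d1 l s with
              | None => OptNeedMore
              | Some (false, l', s') => X l' s'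
              | Some (true, l', s') => Y l' s' end) =
  loopP d0 d1 (fun x l' s' => needs_more (if x then Y l' s' else X l' s')) l s.
Proof. by rewrite /loopP; case: opt_loop => [[[[] l'] s']|]. Qed.

Definition fr (T : nat) (x : rat) : rat := x * 2 ^+ T - (phi T x)%:~R.

Lemma kap_fr a c T : ((kapb a c T : nat)%:R : rat) = fr T a + fr T c - fr T (a + c).
Proof.
have := kap_int a c T.
rewrite /fr => h.
have -> : ((kapb a c T : nat)%:R : rat) = ((kapb a c T : nat)%:Z)%:~R by [].
rewrite h !rmorphB /=. ring.
Qed.

Lemma floor0_itv (x : rat) : 0 <= x -> x < 1 -> Num.floor x = 0.
Proof. by move=> h0 h1; apply: floor_def; rewrite h0 /= add0r. Qed.

Lemma w0_kap0 a c : 0 < a -> 0 < c -> a + c <= 1 -> bdigit (a + c) 0 = kapb a c 0.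
Proof.
move=> ha hc hac.
rewrite /bdigit /kapb /phi !expr0 !mulr1.
rewrite (floor0_itv (ltW ha)); last by lra.
rewrite (floor0_itv (ltW hc)); last by lra.
case: (ltrP (a + c) 1) => h.
  by rewrite floor0_itv //; lra.
have -> : a + c = 1 by lra.
by rewrite floor1.
Qed.

Section Main.
Variables (n : nat) (B : BinFormat n) (F : n.-tuple bool -> rat) (T : nat).
Variables (Q : rat -> Prop) (H : rat -> rat).
Hypothesis hH : forall x y, Q x -> Q y -> x <= y -> fr T (y - x) <= H y - H x.
Hypothesis hFQ : forall b, Q (Fmid B F b).
Hypothesis monoL : forall b d, ((size b + size d).+1 < n)%N ->
  Fmid B F (b ++ false :: d) <= Fmid B F b.
Hypothesis monoR : forall b d, ((size b + size d).+1 < n)%N ->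
  Fmid B F b <= Fmid B F (b ++ true :: d).

Definition Cv k b l f0 f1 := cnt (fun s => needs_more (opt_run B F k b l f0 f1 s)) (T - l).
Definition W k b f0 f1 := (\sum_(l < T.+1) bdigit (f1 - f0) l * Cv k b l f0 f1)%N.

Lemma W_split k b f0 f1 : W k b f0 f1 =
  (bdigit (f1 - f0) 0 * Cv k b 0 f0 f1 + \sum_(1 <= j < T.+1) bdigit (f1 - f0) j * Cv k b j f0 f1)%N.
Proof. rewrite /W -(@big_mkord _ _ _ T.+1 xpredT (fun l => bdigit (f1 - f0) l * Cv k b l f0 f1)%N). by rewrite (big_ltn (ltn0Sn T)). Qed.

Lemma W0 b f0 f1 : W 0 b f0 f1 = 0%N.
Proof.
rewrite /W big1 // => l _.
by rewrite /Cv (cnt_ext (Q := fun _ => false)) ?cnt_false ?muln0.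
Qed.

Lemma main_ind k : forall b f0 f1, (size b + k)%N = n -> Q f0 -> Q f1 -> 0 <= f0 -> f1 <= 1 ->
  f0 <= f1 ->
  (forall d, (size d < k)%N -> f0 <= Fmid B F (b ++ d) <= f1) ->
  (W k b f0 f1)%:R + fr T (f1 - f0) <= H f1 - H f0.
Proof.
elim: k => [|k IH] b f0 f1 hsz hQ0 hQ1 h0 h1 h01 hd.
  by rewrite W0 add0r; apply: hH.
have /andP [h02 h21] : f0 <= Fmid B F b <= f1 by have := hd [::] isT; rewrite cats0.
have invL : forall d, (size d < k)%N ->
    f0 <= Fmid B F (rcons b false ++ d) <= Fmid B F b.
  move=> d hdk; rewrite cat_rcons.
  have /andP [-> _] := hd (false :: d) hdk.
  by rewrite monoL //; rewrite -hsz; lia.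
have invR : forall d, (size d < k)%N ->
    Fmid B F b <= Fmid B F (rcons b true ++ d) <= f1.
  move=> d hdk; rewrite cat_rcons.
  have /andP [_ ->] := hd (true :: d) hdk.
  by rewrite monoR //; rewrite -hsz; lia.
have hszL : (size (rcons b false) + k)%N = n by rewrite size_rcons -hsz addSnnS.
have hszR : (size (rcons b true) + k)%N = n by rewrite size_rcons -hsz addSnnS.
have IHL := IH (rcons b false) f0 (Fmid B F b) hszL hQ0 (hFQ b) h0 (le_trans h21 h1) h02 invL.
have IHR := IH (rcons b true) (Fmid B F b) f1 hszR (hFQ b) hQ1 (le_trans h0 h02) h1 h21 invR.
case: (eqVneq (Fmid B F b) f1) => e1.
  have -> : W k.+1 b f0 f1 = W k (rcons b false) f0 (Fmid B F b).
    rewrite /W e1; apply: eq_bigr => l _; congr (_ * _)%N.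
    by apply: cnt_ext => s _ /=; rewrite e1 eqxx.
  by rewrite -e1.
case: (eqVneq (Fmid B F b) f0) => e0.
  have -> : W k.+1 b f0 f1 = W k (rcons b true) (Fmid B F b) f1.
    rewrite /W e0; apply: eq_bigr => l _; congr (_ * _)%N.
    by apply: cnt_ext => s _ /=; rewrite (negbTE e1) e0 eqxx.
  by rewrite -e0.
have ha : 0 < Fmid B F b - f0 by rewrite subr_gt0 lt_def e0 h02.
have hc : 0 < f1 - Fmid B F b by rewrite subr_gt0 lt_def eq_sym e1 h21.
pose a := bdigit (Fmid B F b - f0); pose c := bdigit (f1 - Fmid B F b).
pose w := bdigit (f1 - f0); pose kap := kapb (Fmid B F b - f0) (f1 - Fmid B F b).
pose hfun := fun (x : bool) l' s' => needs_more (if x then opt_run B F k (rcons b true) l' (Fmid B F b) f1 s'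
                                    else opt_run B F k (rcons b false) l' f0 (Fmid B F b) s').
pose lc l := cnt (loopP a c hfun l) (T - l).
pose CL l := Cv k (rcons b false) l f0 (Fmid B F b).
pose CR l := Cv k (rcons b true) l (Fmid B F b) f1.
pose Cvv l := Cv k.+1 b l f0 f1.
have hCv_all : forall l, Cvv l = if (0 < l)%N && a l && ~~ c l then CL l
         else if (0 < l)%N && ~~ a l && c l then CR l else lc l.
  move=> l; rewrite /Cvv /Cv.
  rewrite (cnt_ext (Q := fun s => if (0 < l)%N && a l && ~~ c l then
                 needs_more (opt_run B F k (rcons b false) l f0 (Fmid B F b) s)
             else if (0 < l)%N && ~~ a l && c l then
                 needs_more (opt_run B F k (rcons b true) l (Fmid B F b) f1 s)
             else loopP a c hfun l s)); last first.
    move=> s _ /=; rewrite (negbTE e1) (negbTE e0).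
    case: ifP => _; first done.
    case: ifP => _; first done.
    exact: needs_more_loop.
  by case: ifP => _ //; case: ifP.
have eac : f1 - f0 = (Fmid B F b - f0) + (f1 - Fmid B F b) by ring.
have hk : forall j, (kap j.+1 + a j.+1 + c j.+1 = 2 * kap j + w j.+1)%N.
  by move=> j; rewrite /w eac; apply: kap_rec; apply: ltW.
have hlc : forall l, (l < T)%N -> lc l = ((if a l.+1 then CL l.+1 else lc l.+1)
                           + (if c l.+1 then CR l.+1 else lc l.+1))%N.
  move=> l hl; rewrite /lc.
  have -> : (T - l = (T - l.+1).+1)%N by lia.
  by rewrite cnt_loopS.
have hT : lc T = 1%N by rewrite /lc subnn cnt_loop0.
have hCv : forall j, (0 < j <= T)%N -> Cvv j = if a j && ~~ c j then CL j
                                 else if ~~ a j && c j then CR j else lc j.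
  by move=> j /andP [hj _]; rewrite hCv_all hj.
have LB := loop_bound hk hlc hT hCv (leq0n T).
have hW : W k.+1 b f0 f1 = (kap 0 * lc 0 + \sum_(1 <= j < T.+1) w j * Cvv j)%N.
  rewrite W_split; congr addn.
  have -> : Cv k.+1 b 0 f0 f1 = lc 0 by rewrite -/(Cvv 0) hCv_all.
  congr (_ * _)%N.
  rewrite eac w0_kap0 //; lra.
have hWL : (\sum_(1 <= j < T.+1) a j * CL j <= W k (rcons b false) f0 (Fmid B F b))%N.
  by rewrite W_split leq_addl.
have hWR : (\sum_(1 <= j < T.+1) c j * CR j <= W k (rcons b true) (Fmid B F b) f1)%N.
  by rewrite W_split leq_addl.
have hn : (W k.+1 b f0 f1 <= W k (rcons b false) f0 (Fmid B F b)
            + W k (rcons b true) (Fmid B F b) f1 + kap T)%N.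
  rewrite hW; apply: (leq_trans LB); rewrite big_split /=.
  by rewrite leq_add2r leq_add.
have hn' : ((W k.+1 b f0 f1)%:R : rat) <= (W k (rcons b false) f0 (Fmid B F b))%:R
            + (W k (rcons b true) (Fmid B F b) f1)%:R + (kap T : nat)%:R.
  by rewrite -!natrD ler_nat.
have hkf := kap_fr (Fmid B F b - f0) (f1 - Fmid B F b) T.
rewrite -eac in hkf.
rewrite -/kap in hkf.
lra.
Qed.
End Main.

Lemma lex_cat p s t : lex_lt (p ++ s) (p ++ t) = lex_lt s t.
Proof. by elim: p => //= x p ->; case: x. Qed.

Lemma lex_ones s : false \in s -> lex_lt s (nseq (size s) true).
Proof.
elim: s => //= x s IH; rewrite in_cons; case: x => //=.
Qed.

Lemma val_mk_tup n s : size s = n -> val (mk_tup n s) = s.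
Proof. by move=> h; rewrite /mk_tup val_insubd h eqxx. Qed.

Section Mono.
Variables (n : nat) (B : BinFormat n) (F : n.-tuple bool -> rat).
Hypothesis hmono : forall c c' : n.-tuple bool, lex_lt c c' -> F (bf_phi B c) <= F (bf_phi B c').

Lemma mono_seq x y : size x = n -> size y = n -> lex_lt x y ->
  F (bf_phi B (mk_tup n x)) <= F (bf_phi B (mk_tup n y)).
Proof. by move=> hx hy hl; apply: hmono; rewrite !val_mk_tup. Qed.

Lemma monoL' b d : ((size b + size d).+1 < n)%N ->
  Fmid B F (b ++ false :: d) <= Fmid B F b.
Proof.
move=> h; rewrite /Fmid; apply: mono_seq.
- rewrite ?size_cat /= ?size_cat ?size_nseq /=; lia.
- rewrite ?size_cat /= ?size_cat ?size_nseq /=; lia.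
rewrite -catA lex_cat /=.
have -> : (n - size b - 1 = size (d ++ false :: nseq (n - size (b ++ false :: d) - 1) true))%N.
  rewrite ?size_cat /= ?size_cat ?size_nseq /=; lia.
by apply: lex_ones; rewrite mem_cat in_cons eqxx orbT.
Qed.

Lemma monoR' b d : ((size b + size d).+1 < n)%N ->
  Fmid B F b <= Fmid B F (b ++ true :: d).
Proof.
move=> h; rewrite /Fmid; apply: mono_seq.
- rewrite ?size_cat /= ?size_cat ?size_nseq /=; lia.
- rewrite ?size_cat /= ?size_cat ?size_nseq /=; lia.
by rewrite -catA lex_cat.
Qed.
End Mono.

Lemma expz_split (K : nat) (z : int) : - (K%:Z) <= z ->
  exists q p : nat, (p <= K)%N /\ (2 : rat) ^ z = 2 ^+ q / 2 ^+ p.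
Proof.
case: z => [q|k] h.
  by exists q, 0%N; split => //; rewrite expr0 divr1.
exists 0%N, k.+1; split; first by move: h; rewrite NegzE; lia.
by rewrite expr0 mul1r.
Qed.

Lemma float_repr E m x : (1 < E)%N -> in_F01 E m x ->
  exists N q p : nat, [/\ (N < 2 ^ m.+1)%N, (p <= m + (2 ^ E.-1 - 2))%N &
     x = N%:R * 2 ^+ q / 2 ^+ p].
Proof.
move=> hE [[e [M [he hM ->]]] _].
have hE2 : (2 <= 2 ^ E.-1)%N.
  by rewrite -[X in (X <= _)%N]expn1 leq_exp2l //; lia.
set K := (2 ^ E.-1 - 2)%N.
have h2m : (2 : rat) ^+ m != 0 by rewrite expf_neq0.
rewrite /float_val; case: eqP => [e0|en0].
  exists M, 0%N, (m + K)%N; split => //.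
  - by apply: (leq_trans hM); rewrite leq_exp2l.
  have -> : (1 - fbias E) = - (K%:Z) by rewrite /fbias /K; lia.
  by rewrite -exprnN expr0 mulr1 exprD invfM mulrA.
have [q [p [hp ->]]] := @expz_split K (e%:Z - fbias E) ltac:(rewrite /fbias /K; lia).
exists (2 ^ m + M)%N, q, (m + p)%N; split.
- by rewrite expnS mul2n -addnn ltn_add2l.
- by rewrite leq_add2l.
rewrite natrD natrX exprD invfM.
field; apply/andP; split => //; exact: expf_neq0.
Qed.

Lemma fr_int T y : y * 2 ^+ T \is a Num.int -> fr T y = 0.
Proof. by move=> h; rewrite /fr /phi floorK // subrr. Qed.

Lemma fr_ge0 T y : 0 <= fr T y.
Proof. by rewrite /fr subr_ge0 /phi floor_le. Qed.

Lemma fr_le T y : 0 <= y -> fr T y <= y * 2 ^+ T.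
Proof.
move=> hy; rewrite /fr lerBlDr lerDl.
have := phi_ge0 T hy; rewrite /phi => h.
by rewrite ler0z.
Qed.

Lemma nat_pow_int (N a p : nat) : (p <= a)%N -> (N%:R * 2 ^+ a / 2 ^+ p : rat) \is a Num.int.
Proof.
move=> h; rewrite -(subnK h) exprD mulrA mulfK ?expf_neq0 //.
by rewrite -natrX -natrM natr_int.
Qed.

Section Floats.
Variables (E m : nat).
Hypothesis hE : (1 < E)%N.
Let K := (2 ^ E.-1 - 2)%N.

Lemma float_int_T T x : in_F01 E m x -> (m + K <= T)%N -> x * 2 ^+ T \is a Num.int.
Proof.
move=> hx hT; have [N [q [p [hN hp ->]]]] := float_repr hE hx.
have -> : N%:R * 2 ^+ q / 2 ^+ p * 2 ^+ T = (N%:R * 2 ^+ (q + T) / 2 ^+ p : rat).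
  by rewrite exprD; field; rewrite expf_neq0.
by apply: nat_pow_int; rewrite /K in hp; lia.
Qed.

Lemma float_int_big T x : in_F01 E m x -> 2 ^+ m <= x * 2 ^+ T -> x * 2 ^+ T \is a Num.int.
Proof.
move=> hx hb; have [N [q [p [hN hp ex]]]] := float_repr hE hx.
have e1 : x * 2 ^+ T = (N%:R * 2 ^+ (q + T) / 2 ^+ p : rat).
  by rewrite ex exprD; field; rewrite expf_neq0.
rewrite e1; case: (leqP p (q + T)) => hpq; first exact: nat_pow_int.
exfalso; move: hb; rewrite e1 ler_pdivlMr ?exprn_gt0 // -!natrX -!natrM ler_nat.
rewrite -expnD => h.
have : (N * 2 ^ (q + T) < 2 ^ m.+1 * 2 ^ (q + T))%N by rewrite ltn_pmul2r ?expn_gt0.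
rewrite -expnD => h2.
have : (2 ^ (m.+1 + (q + T)) <= 2 ^ (m + p))%N by rewrite leq_exp2l //; lia.
lia.
Qed.
End Floats.

Section HProps.
Variables (E m : nat).
Hypothesis hE : (1 < E)%N.

Lemma hH_a T x y : (m + (2 ^ E.-1 - 2) <= T)%N -> in_F01 E m x -> in_F01 E m y -> x <= y ->
  fr T (y - x) <= 0 - 0.
Proof.
move=> hT hx hy _; rewrite subrr fr_int // mulrBl.
by rewrite rpredB // (float_int_T (m := m) hE).
Qed.

Definition Hb T (z : rat) : rat := if z * 2 ^+ T <= 2 ^+ m then z * 2 ^+ T else 2 ^+ m.

Lemma hH_b T x y : in_F01 E m x -> in_F01 E m y -> x <= y ->
  fr T (y - x) <= Hb T y - Hb T x.
Proof.
move=> hx hy hxy; rewrite /Hb.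
have hyx : 0 <= y - x by rewrite subr_ge0.
have hXY : x * 2 ^+ T <= y * 2 ^+ T by rewrite ler_pM2r ?exprn_gt0.
case: ifP => hY.
  have -> : x * 2 ^+ T <= 2 ^+ m by apply: le_trans hY.
  by rewrite -mulrBl fr_le.
have hY' : 2 ^+ m <= y * 2 ^+ T by apply: ltW; rewrite ltNge hY.
have hYi := float_int_big hE hy hY'.
case: ifP => hX; last first.
  have hX' : 2 ^+ m <= x * 2 ^+ T by apply: ltW; rewrite ltNge hX.
  have hXi := float_int_big hE hx hX'.
  by rewrite fr_int ?subrr // mulrBl rpredB.
rewrite /fr /phi.
have hFY : (Num.floor (y * 2 ^+ T))%:~R = y * 2 ^+ T by rewrite floorK.
have hfl : (Num.floor (y * 2 ^+ T) - (2 ^+ m : int)) <= Num.floor ((y - x) * 2 ^+ T).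
  rewrite floor_ge_int rmorphB /= hFY rmorphXn /= mulrBl.
  have -> : ((2 : int)%:~R : rat) = 2 by [].
  lra.
have := hfl; rewrite -(ler_int rat) rmorphB /= hFY rmorphXn /=.
have -> : ((2 : int)%:~R : rat) = 2 by [].
rewrite mulrBl; lra.
Qed.
End HProps.

Lemma in_F01_0 E m : (1 < E)%N -> in_F01 E m 0.
Proof.
move=> hE; split; last by rewrite lexx ler01.
exists 0%N, 0%N; split.
- by rewrite subn_gt0 -[X in (X < _)%N](expn0 2) ltn_exp2l //; lia.
- by rewrite expn_gt0.
by rewrite /float_val eqxx mul0r mul0r.
Qed.

Section Root.
Variables (E m n : nat) (B : BinFormat n) (F : n.-tuple bool -> rat).
Hypothesis hE : (1 < E)%N.
Hypothesis hcdf : is_fp_cdf E m B F.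

Definition ctail T := cnt (fun s => needs_more (Opt B F s)) T.

Lemma tail_probE T : tail_prob B F T = (ctail T)%:R / 2 ^+ T.
Proof. by rewrite /tail_prob (card_cnt T (fun s => needs_more (Opt B F s))). Qed.

Lemma root_bound T (H : rat -> rat) :
  (forall x y, in_F01 E m x -> in_F01 E m y -> x <= y -> fr T (y - x) <= H y - H x) ->
  (ctail T)%:R <= H 1 - H 0.
Proof.
move=> hH; case: hcdf => hF hF1 hmono.
have hmono' : forall c c' : n.-tuple bool, lex_lt c c' -> F (bf_phi B c) <= F (bf_phi B c').
  by move=> c c' h; apply: hmono; exists c, c'; split.
have hFQ : forall b, in_F01 E m (Fmid B F b) by move=> b; apply: hF.
have hQ1 : in_F01 E m 1 by rewrite -hF1; apply: hF.
have := @main_ind n B F T (in_F01 E m) H hH hFQ (monoL' hmono') (monoR' hmono') n [::] 0 1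
  (add0n n) (in_F01_0 m hE) hQ1 (lexx 0) (lexx 1) ler01.
move=> /(_ (fun d _ => proj2 (hF _))).
rewrite W_split subr0.
have -> : bdigit 1 0 = true by rewrite /bdigit expr0 mulr1 floor1.
rewrite mul1n natrD => h.
have h1 := fr_ge0 T 1.
have h2 : 0 <= ((\sum_(1 <= j < T.+1) bdigit 1 j * Cv B F T n [::] j 0 1)%N%:R : rat) by [].
have -> : ctail T = Cv B F T n [::] 0 0 1 by rewrite /Cv subn0.
lra.
Qed.

Lemma tail_le1 T : tail_prob B F T <= 1.
Proof.
rewrite tail_probE ler_pdivrMr ?exprn_gt0 // mul1r -natrX ler_nat.
exact: cnt_le.
Qed.

Lemma tail_ge0 T : 0 <= tail_prob B F T.
Proof. by rewrite tail_probE divr_ge0 // exprn_ge0. Qed.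

Lemma tail_le_geo T : tail_prob B F T <= 2 ^+ m / 2 ^+ T.
Proof.
rewrite tail_probE ler_pM2r ?invr_gt0 ?exprn_gt0 //.

apply: (le_trans (root_bound (@hH_b E m hE T))).
rewrite /Hb mul0r exprn_ge0 // subr0 mul1r.
by case: ifP => // /negbT.
Qed.

Lemma tail_zero T : (m + (2 ^ E.-1 - 2) <= T)%N -> tail_prob B F T <= 0.
Proof.
move=> hT.
rewrite tail_probE pmulr_lle0 ?invr_gt0 ?exprn_gt0 //.
have := root_bound (H := fun _ => 0) (fun x y hx hy hxy => hH_a hE hT hx hy hxy).
by rewrite subrr.
Qed.
End Root.

Definition bnd (m j : nat) : rat :=
  if (j <= m)%N then j%:R else (m + 2)%:R - 2 ^+ m.+1 / 2 ^+ j.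

Lemma bnd_step m j (t : rat) : t <= 1 -> t <= 2 ^+ m / 2 ^+ j -> bnd m j + t <= bnd m j.+1.
Proof.
move=> h1 h2; rewrite /bnd.
have h2j : (2 : rat) ^+ j != 0 by rewrite expf_neq0.
case: (ltngtP j m) => hj.
- by rewrite -addn1 natrD mulr1n; lra.
- set r := (2 : rat) ^+ m / 2 ^+ j in h2 *.
  have e1 : (2 : rat) ^+ m.+1 / 2 ^+ j = 2 * r by rewrite /r exprS mulrA.
  have e2 : (2 : rat) ^+ m.+1 / 2 ^+ j.+1 = r.
    by rewrite /r !exprS; field; rewrite h2j.
  rewrite e1 e2; lra.
- rewrite hj divff ?expf_neq0 // natrD.
  lra.
Qed.

Lemma bnd_mono m j : bnd m j <= bnd m j.+1.
Proof.
have := @bnd_step m j 0 ler01; rewrite addr0; apply.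
by rewrite divr_ge0 // exprn_ge0.
Qed.

Lemma bnd_mono' m j d : bnd m j <= bnd m (j + d).
Proof.
elim: d => [|d IH]; first by rewrite addn0.
by apply: (le_trans IH); rewrite addnS bnd_mono.
Qed.

Unset Implicit Arguments.

Theorem theorem5p18 (E m n : nat) (B : BinFormat n) (F : n.-tuple bool -> rat) :
  (1 < E)%N ->
  is_fp_cdf E m B F ->
  expected_bits_le B F ((m + 2)%:R - (2 : rat) ^ (3 - (2 ^ E.-1)%:Z)).
Proof.
move=> hE hcdf N.
have hE2 : (2 <= 2 ^ E.-1)%N.
  by rewrite -[X in (X <= _)%N]expn1 leq_exp2l //; lia.
set K := (2 ^ E.-1 - 2)%N.
have hS : forall N, \sum_(k < N) tail_prob B F k <= bnd m (minn N (m + K)).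
  elim => [|M IH].
    by rewrite big_ord0 /bnd min0n leq0n.
  rewrite big_ord_recr /=.
  case: (leqP (m + K) M) => h.
    have -> : minn M.+1 (m + K) = (m + K)%N by apply/minn_idPr; lia.
    have e : minn M (m + K) = (m + K)%N by apply/minn_idPr.
    rewrite e in IH.
    have := tail_zero hE hcdf h; lra.
  have -> : minn M.+1 (m + K) = M.+1 by apply/minn_idPl.
  have e : minn M (m + K) = M by apply/minn_idPl; lia.
  rewrite e in IH.
  have := bnd_step (tail_le1 B F M) (tail_le_geo hE hcdf M); lra.
apply: (le_trans (hS N)).
have hmn : (minn N (m + K) <= m + K)%N by rewrite geq_minr.
have := bnd_mono' m (minn N (m + K)) (m + K - minn N (m + K)).
rewrite subnKC // => hb.
apply: (le_trans hb).
have -> : (3 - (2 ^ E.-1)%:Z) = 1 - K%:Z by rewrite /K; lia.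
rewrite /bnd.
clear hS hb hmn; clearbody K; case: K => [|k].
  by rewrite addn0 leqnn natrD subr0 expr1z; lra.
have -> : (m + k.+1 <= m)%N = false by apply/negbTE; rewrite -ltnNge; lia.
have -> : (1 - k.+1%:Z) = - (k%:Z) by lia.
rewrite -exprnN.
have -> : (m + k.+1 = m.+1 + k)%N by lia.
by rewrite exprD invfM mulrA divff ?expf_neq0 // mul1r.
Qed.
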